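(* Let $H$ be a binary tree based graph, $M$ a pseudomatching of $H$ and $0\le\eta\le 1$. Let $S$ be a set of literals with $Vars(S)=V(H)\setminus\bigcup M$ that is $\eta$-comfortable w.r.t. $M$, and let $\varphi\in{\bf CNF}(M)$. Then $\Pr({\bf ES}(\varphi)\mid {\bf EC}(S))\le (2/3)^{\eta|M|}$.
   Context: Sets of literals never contain a variable together with its negation; $Vars(S)$ is the set of variables occurring in $S$. A rooted tree is extended if none of its leaves has a sibling. A graph $H$ is a binary tree based graph if it is the edge-disjoint union of extended rooted trees $T_1,\dots,T_m$ with roots $t_1,\dots,t_m$ such that every leaf of some $T_i$ is a leaf of exactly two of the trees, and any two trees have at most one common vertex, which is a leaf of both. Vertices of $H$ are root vertices (the $t_i$), leaf vertices (leaves of the trees) and internal vertices (the rest; each lies in exactly one tree). Two internal vertices are siblings if they are siblings in the tree containing them. $T_i,T_j$ are adjacent if they share a leaf $\ell_{i,j}$; $P_{i,j}$ is the path between $t_i$ and $t_j$ in $T_i\cup T_j$; $P^{1/2}_{i\to j}$ is the path in $T_i$ from $t_i$ to $\ell_{i,j}$. A pseudoedge is a pair $\{t_i,t_j\}$ with $T_i,T_j$ adjacent; a pseudomatching is a set of pairwise disjoint pseudoedges; $\bigcup M$ is the set of ends of pseudoedges in $M$. $\phi_H$ is the CNF on variables $V(H)$ with a clause $C_{i,j}$ (positive literals of $V(P_{i,j})$) for each pseudoedge. A set $S$ falsifies a clause if all its variables occur negatively in $S$. ${\bf CNF}(M)$ is the set of CNFs consisting, for each $\{t_i,t_j\}\in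 M$, of one clause that is either the disjunction of positive literals of $V(P^{1/2}_{i\to j})$ or of $V(P^{1/2}_{j\to i})$. $S$ respects a pseudoedge $\{t_i,t_j\}$ if all non-root variables of $C_{i,j}$ occur negatively in $S$ and the siblings of all internal variables of $C_{i,j}$ occur positively in $S$. $S$ is $\eta$-comfortable w.r.t. $M$ if $S$ falsifies no clause of $\phi_H$ and $S$ respects at least $\eta|M|$ pseudoedges of $M$. Probability space: ${\bf SAT}(H)$ is the set of satisfying assignments of $\phi_H$ (sets $S'$ with $Vars(S')=V(H)$ satisfying all clauses). The positive literal $\ell_{i,j}$ is fixed w.r.t. $S'$ if $\ell_{i,j}\in S'$ and all other variables of $C_{i,j}$ occur negatively in $S'$; $Fix(S')$ is the set of fixed literals. Each $S'\in{\bf SAT}(H)$ has probability $(1/2)^{|V(H)\setminus Fix(S')|}$. Events: ${\bf EC}(S)=\{S'\in{\bf SAT}(H): S\subseteq S'\}$; ${\bf ES}(\varphi)=\{S'\in{\bf SAT}(H): S'\text{ satisfies }\varphi\}$. *)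

(* Defs.v *)
From HB Require Import structures.
From mathcomp Require Import all_boot all_order all_algebra.
From mathcomp Require Import reals exp.

Set Implicit Arguments.
Unset Strict Implicit.
Unset Printing Implicit Defensive.

Import Order.TTheory GRing.Theory Num.Theory.
Local Open Scope ring_scope.

(* A family of m rooted trees on the vertex type V.                    *)
(*   par i : parent map of T_i (convention: par i (rt i) = rt i).      *)
Record tfam (V : finType) (m : nat) := TFam {
  VT  : 'I_m -> {set V};
  rt  : 'I_m -> V;
  par : 'I_m -> V -> V }.

Section TreeBased.
Variables (V : finType) (m : nat) (H : tfam V m).

Definition is_rooted_tree (i : 'I_m) : Prop :=
  [/\ rt H i \in VT H i,
      par H i (rt H i) = rt H i,
      forall v, v \in VT H i -> par H i v \in VT H i
    & forall v, v \in VT H i -> exists k, iter k (par H i) v = rt H i].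

Definition children (i : 'I_m) (u : V) : {set V} :=
  [set v in VT H i | (v != rt H i) && (par H i v == u)].

Definition leaf (i : 'I_m) (v : V) : bool :=
  [&& v \in VT H i, v != rt H i & children i v == set0].

Definition extended (i : 'I_m) : Prop :=
  forall l w, leaf i l -> w \in VT H i -> w != rt H i ->
    par H i w = par H i l -> w = l.

Definition binary_tree_based : Prop :=
  [/\ forall i, is_rooted_tree i,
      forall i, extended i,
      forall v, exists i, v \in VT H i,
      forall i l, leaf i l -> #|[set k | leaf k l]| = 2
    &
      forall i j, i != j ->
        (#|VT H i :&: VT H j| <= 1)%N /\
        (forall v, v \in VT H i -> v \in VT H j -> leaf i v && leaf j v)].
(* edge-disjointness follows from "at most one common vertex". *)

Definition isroot (v : V) : bool := v \in [set rt H i | i : 'I_m].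
Definition isleafv (v : V) : bool := [exists i, leaf i v].
Definition internal (v : V) : bool := ~~ isroot v && ~~ isleafv v.

Definition sibling (x w : V) : bool :=
  [&& x != w, internal w &
    [exists k, [&& x \in VT H k, w \in VT H k & par H k x == par H k w]]].

Definition pathV (i : 'I_m) (v : V) : {set V} :=
  [set x | [exists k : 'I_#|V|.+1, iter k (par H i) v == x]].

Definition adjacent (i j : 'I_m) : bool :=
  (i != j) && [exists l, leaf i l && leaf j l].

Definition Cvars (i j : 'I_m) : {set V} :=
  [set x | [exists l, [&& leaf i l, leaf j l &
                          (x \in pathV i l) || (x \in pathV j l)]]].

Definition halfV (i j : 'I_m) : {set V} :=
  [set x | [exists l, [&& leaf i l, leaf j l & x \in pathV i l]]].

(* a literal is (v, true) = v positive, or (v, false) = v negative *)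
Definition consistent (S : {set V * bool}) : bool :=
  [forall v, ~~ (((v, true) \in S) && ((v, false) \in S))].

Definition Vars (S : {set V * bool}) : {set V} := [set l.1 | l in S].

Definition posclause (X : {set V}) : {set V * bool} :=
  [set l : V * bool | l.2 && (l.1 \in X)].

Definition falsifies (S C : {set V * bool}) : bool :=
  [forall l in C, (l.1, ~~ l.2) \in S].

Definition satisfies (S : {set V * bool}) (phi : {set {set V * bool}}) : bool :=
  [forall C in phi, [exists l in C, l \in S]].

Definition phiH : {set {set V * bool}} :=
  [set posclause (Cvars ij.1 ij.2) |
     ij in [set ij : 'I_m * 'I_m | adjacent ij.1 ij.2]].

(* pseudoedges {t_i,t_j} are represented by the index pairs {i,j} *)
Definition pseudoedge (e : {set 'I_m}) : bool :=
  [exists i, exists j, adjacent i j && (e == [set i; j])].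

Definition pseudomatching (M : {set {set 'I_m}}) : bool :=
  [forall e in M, pseudoedge e] && trivIset M.

Definition coverM (M : {set {set 'I_m}}) : {set V} :=
  [set rt H i | i in cover M].

Definition respects_ij (S : {set V * bool}) (i j : 'I_m) : bool :=
  [forall x in Cvars i j, ~~ isroot x ==> ((x, false) \in S)] &&
  [forall x in Cvars i j, internal x ==>
     [forall w, sibling x w ==> ((w, true) \in S)]].

Definition respects (S : {set V * bool}) (e : {set 'I_m}) : bool :=
  [exists i, exists j, [&& e == [set i; j], adjacent i j & respects_ij S i j]].

Definition comfortable (R : realType) (eta : R) (S : {set V * bool})
    (M : {set {set 'I_m}}) : Prop :=
  (forall C, C \in phiH -> ~~ falsifies S C) /\
  eta * (#|M|%:R) <= (#|[set e in M | respects S e]|%:R : R).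

Definition inCNF (M : {set {set 'I_m}}) (phi : {set {set V * bool}}) : Prop :=
  exists c : {set 'I_m} -> {set V * bool},
    (forall e, e \in M -> exists i j, e = [set i; j] /\ adjacent i j /\
        (c e = posclause (halfV i j) \/ c e = posclause (halfV j i))) /\
    phi = [set c e | e in M].

Definition SATH : {set {set V * bool}} :=
  [set S' | [&& consistent S', Vars S' == setT & satisfies S' phiH]].

Definition FixV (S' : {set V * bool}) : {set V} :=
  [set l | ((l, true) \in S') &&
     [exists i, exists j, [&& adjacent i j, leaf i l, leaf j l &
        [forall x in Cvars i j, (x != l) ==> ((x, false) \in S')]]]].

Definition weight (R : realType) (S' : {set V * bool}) : R :=
  (2^-1) ^+ #|~: FixV S'|.

Definition Pr (R : realType) (A : {set {set V * bool}}) : R :=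
  \sum_(S' in SATH :&: A) weight R S'.

Definition condPr (R : realType) (A B : {set {set V * bool}}) : R :=
  Pr R (A :&: B) / Pr R B.

Definition EC (S : {set V * bool}) : {set {set V * bool}} :=
  [set S' in SATH | S \subset S'].

Definition ES (phi : {set {set V * bool}}) : {set {set V * bool}} :=
  [set S' in SATH | satisfies S' phi].

End TreeBased.

(* Main.v *)
Require Import Defs.
From HB Require Import structures.
From mathcomp Require Import all_boot all_order all_algebra.
From mathcomp Require Import reals exp.
Import Order.TTheory GRing.Theory Num.Theory.
Set Implicit Arguments.
Unset Strict Implicit.
Unset Printing Implicit Defensive.

Section Tree.
Variables (V : finType) (m : nat) (H : tfam V m).
Hypothesis HB : binary_tree_based H.

Lemma rt_in i : rt H i \in VT H i.
Proof. by case: HB => /(_ i) []. Qed.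
Lemma par_rt i : par H i (rt H i) = rt H i.
Proof. by case: HB => /(_ i) []. Qed.
Lemma par_in i v : v \in VT H i -> par H i v \in VT H i.
Proof. by case: HB => /(_ i) [] _ _ h _ *; apply: h. Qed.
Lemma iter_in i v n : v \in VT H i -> iter n (par H i) v \in VT H i.
Proof. by move=> hv; elim: n => //= n IH; apply: par_in. Qed.
Lemma reach_rt i v : v \in VT H i -> exists n, iter n (par H i) v = rt H i.
Proof. by case: HB => /(_ i) [] _ _ _ h *; apply: h. Qed.
Lemma leaf_in i v : leaf H i v -> v \in VT H i.
Proof. by case/and3P. Qed.
Lemma rt_uniq i k : rt H i \in VT H k -> k = i.
Proof.
move=> hk; apply/eqP; apply/negPn/negP => ne.
case: HB => _ _ _ _ /(_ k i ne) [_ /(_ _ hk (rt_in i))] /andP[_ /and3P[_ /eqP] //].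
Qed.
Lemma leaf_nroot i k v : leaf H k v -> v != rt H i.
Proof.
move=> hl; apply/eqP => e; subst v.
have := rt_uniq (leaf_in hl) => e; subst k.
by case/and3P: hl => _ /eqP.
Qed.
Lemma pathVP i v x : reflect (exists n, iter n (par H i) v = x) (x \in pathV H i v).
Proof.
rewrite /pathV inE; apply: (iffP existsP) => [[k /eqP <-]|[n <-]]; first by exists k.
have hc := fconnect_iter (par H i) n v.
have hlt := findex_max hc.
have hle : order (par H i) v <= #|V| by apply: max_card.
have hk : findex (par H i) v (iter n (par H i) v) < #|V|.+1 by apply: leq_trans hlt (leq_trans hle (leqnSn _)).
by exists (Ordinal hk); rewrite /= iter_findex.
Qed.
Lemma pathV_sub i v x : v \in VT H i -> x \in pathV H i v -> x \in VT H i.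
Proof. by move=> hv /pathVP [n <-]; apply: iter_in. Qed.
Lemma rt_pathV i v : v \in VT H i -> rt H i \in pathV H i v.
Proof. by move=> hv; apply/pathVP; apply: reach_rt. Qed.
Lemma self_pathV i v : v \in pathV H i v.
Proof. by apply/pathVP; exists 0%N. Qed.
Lemma isrootP x : reflect (exists i, x = rt H i) (isroot H x).
Proof. by rewrite /isroot; apply: (iffP imsetP) => [[i _ ->]|[i ->]]; exists i. Qed.
Lemma Cvars_sym i j : Cvars H i j = Cvars H j i.
Proof.
by apply/setP => x; rewrite !inE; apply/existsP/existsP => [][l /and3P[a b c]];
  exists l; rewrite a b orbC.
Qed.
Lemma internal_nroot x i : internal H x -> x != rt H i.
Proof. by case/andP => /isrootP h _; apply/eqP => e; apply: h; exists i. Qed.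
Lemma internal_nleaf x k : internal H x -> ~~ leaf H k x.
Proof. by case/andP => _ /existsP h; apply/negP => l; apply: h; exists k. Qed.
Lemma leaf_nroot' k x : leaf H k x -> ~~ isroot H x.
Proof. by move=> hl; apply/isrootP => [][i e]; move: (leaf_nroot i hl); rewrite e eqxx. Qed.
Lemma nleaf_internal i y : y \in VT H i -> y != rt H i -> ~~ leaf H i y -> internal H y.
Proof.
move=> hy hr hl; apply/andP; split.
  apply/isrootP => [][k e]; subst y.
  by have e := rt_uniq hy; subst k; rewrite eqxx in hr.
apply/existsP => [][k hk].
have [ik|ik] := eqVneq i k; first by subst k; rewrite hk in hl.
case: HB => _ _ _ _ /(_ i k ik) [_ /(_ _ hy (leaf_in hk)) /andP[h _]].
by rewrite h in hl.
Qed.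
Lemma ext_ax i l w : leaf H i l -> w \in VT H i -> w != rt H i ->
  par H i w = par H i l -> w = l.
Proof. by case: HB => _ /(_ i) h *; apply: h. Qed.

Lemma three_leaf i j k l : leaf H i l -> leaf H j l -> leaf H k l ->
  i != j -> k != i -> k != j -> False.
Proof.
move=> hi hj hk ij ki kj.
case: HB => _ _ _ /(_ i l hi) hc _.
have sub : [set i; j] \subset [set k | leaf H k l].
  by apply/subsetP => x; rewrite !inE => /orP[] /eqP ->.
have e : [set i; j] = [set k | leaf H k l] by apply/eqP; rewrite eqEcard sub cards2 ij hc.
have : k \in [set k | leaf H k l] by rewrite inE.
by rewrite -e !inE (negbTE ki) (negbTE kj).
Qed.

Lemma leaf_path_eq i x w : leaf H i x -> w \in VT H i -> x \in pathV H i w -> x = w.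
Proof.
move=> hl hw /pathVP [[|a]] //= e.
set u := iter a (par H i) w in e.
have hu : u \in VT H i by apply: iter_in.
have [ur|ur] := eqVneq u (rt H i).
  by move: (leaf_nroot i hl); rewrite -e ur par_rt eqxx.
case/and3P: hl => _ _ /eqP hc.
have : u \in children H i x by rewrite inE hu ur e eqxx.
by rewrite hc inE.
Qed.

Lemma T1 S i j k L' : respects_ij H S i j -> adjacent H i j -> leaf H i L' ->
  leaf H k L' -> k != i -> k != j ->
  exists y, [/\ y \in pathV H i L', internal H y & (y, true) \in S].
Proof.
move=> /andP[_ /forall_inP resp] /andP[ij /existsP[L /andP[hLi hLj]]] hL'i hL'k ki kj.
have LL' : L != L'.
  apply/eqP => e; subst L'; exact: three_leaf hLi hLj hL'k ij ki kj.
set f := par H i; set P := pathV H i L.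
have hLV := leaf_in hLi; have hL'V := leaf_in hL'i.
have ex : exists n, iter n f L' \in P.
  by have [n hn] := reach_rt hL'V; exists n; rewrite hn rt_pathV.
case: (ex_minnP ex) => n hnP hmin.
case: n hnP hmin => [|n'] hnP hmin.
  by move: LL'; rewrite (leaf_path_eq hL'i hLV hnP) eqxx.
set y := iter n' f L' in hnP.
have hyP : y \notin P.
  by apply/negP => hy; have := hmin _ hy; rewrite ltnn.
have hyV : y \in VT H i by apply: iter_in.
have yr : y != rt H i by apply/eqP => e; move: hyP; rewrite e rt_pathV.
set z := f y in hnP.
have exa : exists a, iter a f L == z by case/pathVP: hnP => a ha; exists a; apply/eqP.
case: (ex_minnP exa) => a /eqP ha amin.
case: a ha amin => [|a'] ha amin.
  case/and3P: hLi => _ _ /eqP hc.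
  have : y \in children H i L by move: ha => /= ha; rewrite inE hyV yr /= ha.
  by rewrite hc inE.
set c := iter a' f L in ha.
have cz : c != z by apply/eqP => e; have := amin a' (introT eqP e); rewrite ltnn.
have cr : c != rt H i.
  by apply/eqP => e; move: cz; rewrite -ha /= -/c e /f par_rt eqxx.
have hcV : c \in VT H i by apply: iter_in.
have hcP : c \in P by apply/pathVP; exists a'.
have cy : c != y by apply/eqP => e; move: hyP; rewrite -e hcP.
have pcy : par H i c = par H i y by [].
have cint : internal H c.
  apply: (nleaf_internal hcV cr); apply/negP => hl.
  by move: cy; rewrite (ext_ax hl hyV yr (esym pcy)) eqxx.
have yint : internal H y.
  apply: (nleaf_internal hyV yr); apply/negP => hl.
  by move: cy; rewrite (ext_ax hl hcV cr pcy) eqxx.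
have cC : c \in Cvars H i j.
  by rewrite inE; apply/existsP; exists L; rewrite hLi hLj hcP.
have hyS : (y, true) \in S.
  have := resp c cC; rewrite cint /= => /forallP /(_ y) /implyP; apply.
  by rewrite /sibling cy yint /=; apply/existsP; exists i; rewrite hcV hyV pcy eqxx.
exists y; split => //.
by apply/pathVP; exists n'.
Qed.
Lemma adjacent_sym i j : adjacent H i j = adjacent H j i.
Proof.
rewrite /adjacent eq_sym; congr (_ && _).
by apply/existsP/existsP => [][l /andP[a b]]; exists l; rewrite a b.
Qed.
Lemma respects_sym S i j : respects_ij H S i j = respects_ij H S j i.
Proof. by rewrite /respects_ij Cvars_sym. Qed.

Lemma KEY0 S i j k l : respects_ij H S i j -> adjacent H i j -> adjacent H k l ->
  rt H i \in Cvars H k l ->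
  (k = i /\ l = j) \/ (k = j /\ l = i) \/
  exists y, [/\ y \in Cvars H k l, internal H y & (y, true) \in S].
Proof.
move=> hr hij hkl.
have kl : k != l by case/andP: hkl.
rewrite inE => /existsP[L' /and3P[hk hl /orP[hp|hp]]].
  have e := rt_uniq (pathV_sub (leaf_in hk) hp); subst k.
  have [lj|lj] := eqVneq l j; first by left.
  have li : l != i by rewrite eq_sym.
  have [y [h1 h2 h3]] := T1 hr hij hk hl li lj.
  right; right; exists y; split => //.
  by rewrite inE; apply/existsP; exists L'; rewrite hk hl h1.
have e := rt_uniq (pathV_sub (leaf_in hl) hp); subst l.
have [kj|kj] := eqVneq k j; first by right; left.
have [y [h1 h2 h3]] := T1 hr hij hl hk kl kj.
right; right; exists y; split => //.
by rewrite inE; apply/existsP; exists L'; rewrite hk hl h1 orbT.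
Qed.

Lemma KEY S i j k l x : respects_ij H S i j -> adjacent H i j -> adjacent H k l ->
  x \in Cvars H k l -> (x = rt H i \/ x = rt H j) ->
  (k = i /\ l = j) \/ (k = j /\ l = i) \/
  exists y, [/\ y \in Cvars H k l, internal H y & (y, true) \in S].
Proof.
move=> hr hij hkl hx [e|e]; subst x; first exact: KEY0 hr hij hkl hx.
rewrite respects_sym in hr; rewrite adjacent_sym in hij.
by case: (KEY0 hr hij hkl hx) => [h|[h|h]]; [right;left|left|right;right].
Qed.
Lemma rt_Cvars i j : adjacent H i j -> (rt H i \in Cvars H i j) && (rt H j \in Cvars H i j).
Proof.
case/andP => _ /existsP[L /andP[hi hj]]; rewrite !inE; apply/andP; split;
  apply/existsP; exists L; rewrite hi hj /=.
  by rewrite rt_pathV ?(leaf_in hi).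
by rewrite (rt_pathV (leaf_in hj)) orbT.
Qed.

Lemma consP (X : {set V * bool}) v : consistent X -> (v, true) \in X -> (v, false) \in X -> False.
Proof. by move=> /forallP /(_ v) /negP h a b; apply: h; rewrite a b. Qed.

Lemma VarsP (X : {set V * bool}) v : reflect (exists b, (v, b) \in X) (v \in Vars X).
Proof.
apply: (iffP imsetP) => [[[w b] hb /= ->]|[b hb]]; first by exists b.
by exists (v, b).
Qed.

Lemma sat1 (X C : {set V * bool}) : satisfies X [set C] = [exists l in C, l \in X].
Proof.
apply/forall_inP/idP => [h|h C']; first by apply: h; rewrite inE.
by rewrite inE => /eqP ->.
Qed.

Section Tog.
Variables (S : {set V * bool}) (i j : 'I_m).
Hypothesis hr : respects_ij H S i j.
Hypothesis hij : adjacent H i j.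
Definition out (x : V) := (x != rt H i) && (x != rt H j).
Hypothesis Sout : forall l, l \in S -> out l.1.
Definition agree (X Y : {set V * bool}) := forall l, out l.1 -> (l \in X) = (l \in Y).

Lemma resp_neg x : x \in Cvars H i j -> ~~ isroot H x -> (x, false) \in S.
Proof. by case/andP: hr => /forall_inP h _ hx hn; have := h x hx; rewrite hn. Qed.

Lemma rt_ij : rt H i != rt H j.
Proof.
case/andP: hij => ij _; apply/eqP => e.
have h : rt H j \in VT H i by rewrite -e rt_in.
by move: ij; rewrite (rt_uniq h) eqxx.
Qed.

Lemma out_cases x : ~~ out x -> x = rt H i \/ x = rt H j.
Proof. by rewrite negb_and !negbK => /orP[] /eqP; [left|right]. Qed.

Lemma leaf_out k v : leaf H k v -> out v.
Proof. by move=> hl; rewrite /out !(leaf_nroot _ hl). Qed.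

Lemma FixV_sub S1 S2 : consistent S1 -> S \subset S1 -> agree S1 S2 ->
  {subset FixV H S1 <= FixV H S2}.
Proof.
move=> c1 s1 ag v; rewrite !inE => /andP[hv /existsP[k /existsP[l /and4P[hkl hk hl /forall_inP hall]]]].
have vo := leaf_out hk.
rewrite -(ag (v, true)) // hv /=; apply/existsP; exists k; apply/existsP; exists l.
rewrite hkl hk hl /=; apply/forall_inP => x hx; apply/implyP => xv.
have [xo|xo] := boolP (out x); first by rewrite -(ag (x, false)) //; have := hall x hx; rewrite xv.
exfalso; case: (KEY hr hij hkl hx (out_cases xo)) => [[e1 e2]|[[e1 e2]|[y [hy yi hyS]]]].
- subst k l; have hvC : v \in Cvars H i j.
    by rewrite inE; apply/existsP; exists v; rewrite hk hl self_pathV.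
  by apply: (consP c1 hv); apply: (subsetP s1); apply: resp_neg => //; apply: leaf_nroot' hk.
- subst k l; have hvC : v \in Cvars H i j.
    by rewrite inE; apply/existsP; exists v; rewrite hl hk self_pathV.
  by apply: (consP c1 hv); apply: (subsetP s1); apply: resp_neg => //; apply: leaf_nroot' hk.
- have yv : y != v by apply/eqP => e; subst y; move: (internal_nleaf k yi); rewrite hk.
  have := hall y hy; rewrite yv /= => hf.
  by apply: (consP c1 _ hf); apply: (subsetP s1).
Qed.

Lemma sat_phiH S1 S2 : satisfies S1 (phiH H) -> agree S1 S2 -> S \subset S2 ->
  ((rt H i, true) \in S2) || ((rt H j, true) \in S2) -> satisfies S2 (phiH H).
Proof.
move=> /forall_inP h1 ag s2 hab; apply/forall_inP => C hC.
have [[k l] hkl eC] := imsetP hC; rewrite inE /= in hkl.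
have /existsP[[x bb] /andP[hlC hlS]] := h1 C hC.
move: hlC; rewrite eC inE /= => /andP[bt hx]; case: bb hlS bt => // hlS _.
have [xo|xo] := boolP (out x).
  by apply/existsP; exists (x, true); rewrite -ag // hlS inE /= hx.
case: (KEY hr hij hkl hx (out_cases xo)) => [[e1 e2]|[[e1 e2]|[y [hy yi hyS]]]].
- subst k l; have /andP[ri rj] := rt_Cvars hij.
  case/orP: hab => hab; apply/existsP; [exists (rt H i, true)|exists (rt H j, true)];
    by rewrite hab inE /= ?ri ?rj.
- subst k l; have /andP[ri rj] := rt_Cvars hij.
  rewrite Cvars_sym in ri rj.
  case/orP: hab => hab; apply/existsP; [exists (rt H i, true)|exists (rt H j, true)];
    by rewrite hab inE /= ?ri ?rj.
- apply/existsP; exists (y, true); rewrite inE /= hy /=.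
  exact: (subsetP s2).
Qed.

Definition tog (al be : bool) (X : {set V * bool}) : {set V * bool} :=
  [set l in X | out l.1] :|: [set (rt H i, al); (rt H j, be)].

Lemma in_tog al be X l : (l \in tog al be X) =
  [|| (l \in X) && out l.1, l == (rt H i, al) | l == (rt H j, be)].
Proof. by rewrite !inE. Qed.

Lemma tog_agree al be (X : {set V * bool}) : agree X (tog al be X).
Proof.
move=> [v b] /= vo; rewrite in_tog /= vo andbT.
case/andP: vo => vi vj.
by rewrite -!pair_eqE /= (negbTE vi) (negbTE vj) !orbF.
Qed.

Lemma agree_sym X Y : agree X Y -> agree Y X.
Proof. by move=> h l hl; rewrite h. Qed.

Lemma tog_cons al be (X : {set V * bool}) : consistent X -> consistent (tog al be X).
Proof.
move=> cX; apply/forallP => v; apply/negP => /andP[h1 h2].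
have [vo|vo] := boolP (out v).
  by apply: (consP cX (v:=v)); rewrite (tog_agree al be X) ?h1 ?h2.
have ij := rt_ij; have ji : rt H j != rt H i by rewrite eq_sym.
move: h1 h2; rewrite !in_tog /= (negbTE vo) !andbF /= -!pair_eqE /=.
by case/out_cases: vo => ->; rewrite ?eqxx ?(negbTE ij) ?(negbTE ji) /=; case: al; case: be.
Qed.

Lemma tog_Vars al be (X : {set V * bool}) : Vars X = setT -> Vars (tog al be X) = setT.
Proof.
move=> hX; apply/setP => v; rewrite inE; apply/VarsP.
have [vo|vo] := boolP (out v).
  have : v \in Vars X by rewrite hX inE.
  by case/VarsP => b hb; exists b; rewrite -tog_agree.
by case/out_cases: vo => ->; [exists al|exists be]; rewrite in_tog eqxx ?orbT.
Qed.

Lemma tog_sub al be (X : {set V * bool}) : S \subset X -> S \subset tog al be X.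
Proof.
move=> /subsetP h; apply/subsetP => l hl.
by rewrite -tog_agree ?h ?Sout.
Qed.

Lemma tog_mem al be (X : {set V * bool}) : ((rt H i, al) \in tog al be X) && ((rt H j, be) \in tog al be X).
Proof. by rewrite !in_tog !eqxx !orbT. Qed.

Lemma togK al be al' be' (X : {set V * bool}) : consistent X -> (rt H i, al) \in X -> (rt H j, be) \in X ->
  tog al be (tog al' be' X) = X.
Proof.
move=> cX ha hb; apply/setP => [[v b]].
have [vo|vo] := boolP (out v).
  by rewrite -!(tog_agree _ _ _ (l:=(v,b))).
rewrite in_tog /= (negbTE vo) andbF /= -!pair_eqE /=.
have ij := rt_ij; have ji : rt H j != rt H i by rewrite eq_sym.
case/out_cases: vo => ->; rewrite ?eqxx ?(negbTE ij) ?(negbTE ji) /= ?orbF.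
  case: eqP => [e|ne]; first by subst; rewrite ha.
  apply/esym/negP => hb'; move: ha hb' ne.
  by case: b; case: al => ha hb' ne //; [apply: (consP cX hb' ha)|apply: (consP cX ha hb')].
case: eqP => [e|ne]; first by subst; rewrite hb.
apply/esym/negP => hb'; move: hb hb' ne.
by case: b; case: be => hc hb' ne //; [apply: (consP cX hb' hc)|apply: (consP cX hc hb')].
Qed.

Lemma tog_SATH al be (X : {set V * bool}) : X \in SATH H -> S \subset X -> al || be ->
  tog al be X \in SATH H.
Proof.
rewrite !inE => /and3P[c v s] sx ab.
rewrite tog_cons // (tog_Vars _ _ (eqP v)) eqxx /=.
apply: (sat_phiH s (tog_agree al be X) (tog_sub al be sx)).
have /andP[h1 h2] := tog_mem al be X; move: ab h1 h2.
by case: al; case: be => //= _ h1 h2; rewrite ?h1 ?h2 ?orbT.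
Qed.

Lemma tog_FixV al be (X : {set V * bool}) : consistent X -> S \subset X ->
  FixV H (tog al be X) = FixV H X.
Proof.
move=> c sx; apply/setP => v; apply/idP/idP.
  exact: (FixV_sub (tog_cons al be c) (tog_sub al be sx) (agree_sym (tog_agree al be X))).
exact: (FixV_sub c sx (tog_agree al be X)).
Qed.

Lemma tog_weight (R : realType) al be (X : {set V * bool}) : consistent X -> S \subset X ->
  weight H R (tog al be X) = weight H R X.
Proof. by move=> c sx; rewrite /weight tog_FixV. Qed.

Lemma Cij_sat (X : {set V * bool}) : X \in SATH H -> S \subset X ->
  ((rt H i, true) \in X) || ((rt H j, true) \in X).
Proof.
rewrite !inE => /and3P[c _ /forall_inP s] sx.
have hC : posclause (Cvars H i j) \in phiH H.
  by apply/imsetP; exists (i, j); rewrite // inE.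
have /existsP[[x b] /andP[]] := s _ hC; rewrite inE /= => /andP[bt hx]; case: b bt => // _ hxX.
have [xr|xr] := boolP (isroot H x).
  case/isrootP: xr => k e; subst x.
  move: hx; rewrite inE => /existsP[L /and3P[hi hj /orP[hp|hp]]].
    by have e := rt_uniq (pathV_sub (leaf_in hi) hp); subst k; rewrite hxX.
  by have e := rt_uniq (pathV_sub (leaf_in hj) hp); subst k; rewrite hxX orbT.
by exfalso; apply: (consP c hxX); apply: (subsetP sx); apply: resp_neg.
Qed.

Lemma lit_false (X : {set V * bool}) v : consistent X -> Vars X = setT ->
  ((v, false) \in X) = ((v, true) \notin X).
Proof.
move=> c hv; have : v \in Vars X by rewrite hv inE.
case/VarsP => [[]] h.
  by rewrite h /=; apply/negP => h'; apply: (consP c h h').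
by rewrite h; apply/esym/negP => h'; apply: (consP c h' h).
Qed.

Lemma halfV_sat (X : {set V * bool}) : consistent X -> S \subset X ->
  [exists l in posclause (halfV H i j), l \in X] = ((rt H i, true) \in X).
Proof.
move=> c sx; apply/idP/idP.
  case/exists_inP => [[x b]]; rewrite inE /= => /andP[bt hx]; case: b bt => // _ hxX.
  move: hx; rewrite inE => /existsP[L /and3P[hi hj hp]].
  have [xr|xr] := boolP (isroot H x).
    case/isrootP: xr => k e; subst x.
    by have e := rt_uniq (pathV_sub (leaf_in hi) hp); subst k.
  exfalso; apply: (consP c hxX); apply: (subsetP sx); apply: resp_neg => //.
  by rewrite inE; apply/existsP; exists L; rewrite hi hj hp.
move=> h; apply/exists_inP; exists (rt H i, true) => //; rewrite inE /= inE.
case/andP: hij => _ /existsP[L /andP[hi hj]].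
by apply/existsP; exists L; rewrite hi hj rt_pathV // (leaf_in hi).
Qed.

Lemma agree_sat (X Y C : {set V * bool}) : agree X Y -> (forall l, l \in C -> out l.1) ->
  [exists l in C, l \in X] -> [exists l in C, l \in Y].
Proof.
move=> ag hC /exists_inP[l hl hx]; apply/exists_inP; exists l => //.
by rewrite -ag // hC.
Qed.

Section Sums.
Variables (R : realType) (Om : {set {set V * bool}}).
Hypothesis hOm : forall X, X \in Om -> [/\ X \in SATH H, S \subset X &
  forall al be, al || be -> tog al be X \in Om].
Definition sm (A : {set {set V * bool}}) : R := \sum_(X in A) weight H R X.
Definition part al be := [set X in Om | ((rt H i, al) \in X) && ((rt H j, be) \in X)].

Lemma part_le al be al' be' : al || be -> al' || be' -> sm (part al be) = sm (part al' be').
Proof.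
move=> ab ab'.
have memP X : X \in part al be -> [/\ X \in SATH H, S \subset X, consistent X,
   (rt H i, al) \in X & (rt H j, be) \in X].
  rewrite inE => /andP[hX /andP[h1 h2]]; case: (hOm hX) => hs hsx _.
  by split => //; move: hs; rewrite inE => /and3P[].
rewrite /sm (eq_bigr (fun X => weight H R (tog al' be' X))); last first.
  by move=> X /memP [_ sx c _ _]; rewrite tog_weight.
rewrite -big_imset; last first.
  move=> X Y /memP [_ _ cX hX1 hX2] /memP [_ _ cY hY1 hY2] e.
  by rewrite -(togK al' be' cX hX1 hX2) e togK.
apply: eq_bigl => Y; apply/imsetP/idP => [[X hX ->]|hY].
  have [_ sx _ _ _] := memP X hX.
  rewrite inE tog_mem andbT; move: hX; rewrite inE => /andP[hX _]; by case: (hOm hX) => _ _ ->.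
move: hY; rewrite inE => /andP[hY /andP[h1 h2]].
have [hs hsx ht] := hOm hY.
have cY : consistent Y by move: hs; rewrite inE => /and3P[].
exists (tog al be Y); last by rewrite togK.
by rewrite inE ht // tog_mem.
Qed.

Lemma Om_facts X : X \in Om -> [/\ consistent X, Vars X = setT &
  ((rt H i, true) \in X) || ((rt H j, true) \in X)].
Proof.
move=> hX; case: (hOm hX) => hs sx _; split; last exact: Cij_sat.
  by move: hs; rewrite inE => /and3P[].
by move: hs; rewrite inE => /and3P[_ /eqP].
Qed.

Lemma sm_A : sm [set X in Om | (rt H i, true) \in X] = (sm (part true true) *+ 2)%R.
Proof.
rewrite /sm (big_setID ([set X : {set V * bool} | (rt H j, true) \in X])) /=.
rewrite -/(sm _) -/(sm _) mulr2n.
have -> : [set X in Om | (rt H i, true) \in X] :&: [set X : {set V * bool} | (rt H j, true) \in X] = part true true.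
  by apply/setP => X; rewrite !inE andbA.
have -> : [set X in Om | (rt H i, true) \in X] :\: [set X : {set V * bool} | (rt H j, true) \in X] = part true false.
  apply/setP => X; rewrite !inE.
  case hX: (X \in Om) => //=; last by rewrite !andbF.
  have [c v _] := Om_facts hX.
  by rewrite lit_false // andbC.
by rewrite (part_le (al:=true) (be:=false) (al':=true) (be':=true)).
Qed.

Lemma sm_Om : sm Om = (sm (part true true) *+ 3)%R.
Proof.
rewrite /sm (big_setID ([set X : {set V * bool} | (rt H i, true) \in X])) /=.
rewrite -/(sm _) -/(sm _).
have -> : Om :&: [set X : {set V * bool} | (rt H i, true) \in X] = [set X in Om | (rt H i, true) \in X].
  by apply/setP => X; rewrite !inE.
have -> : Om :\: [set X : {set V * bool} | (rt H i, true) \in X] = part false true.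
  apply/setP => X; rewrite !inE.
  case hX: (X \in Om) => //=; last by rewrite !andbF.
  have [c v hab] := Om_facts hX.
  by rewrite lit_false //; move: hab; case: ((rt H i, true) \in X) => //= ->.
rewrite sm_A (part_le (al:=false) (be:=true) (al':=true) (be':=true)) //.
by rewrite -mulrSr.
Qed.
End Sums.
End Tog.
End Tree.

Definition Gset V m (H : tfam V m) (S : {set V * bool}) (c : {set 'I_m} -> {set V * bool})
  (Q : {set {set 'I_m}}) : {set {set V * bool}} :=
  [set X in EC H S | [forall e in Q, satisfies X [set c e]]].

Lemma pair_eq m (i j i0 j0 : 'I_m) : [set i; j] = [set i0; j0] -> i0 != j0 ->
  (i0 = i /\ j0 = j) \/ (i0 = j /\ j0 = i).
Proof.
move=> e ne.
have : i0 \in [set i; j] by rewrite e !inE eqxx.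
have : j0 \in [set i; j] by rewrite e !inE eqxx orbT.
move: ne; rewrite !inE => ne /orP[] /eqP E1 /orP[] /eqP E2; subst;
  rewrite ?eqxx // in ne; by [right|left].
Qed.

Lemma memG V m (H : tfam V m) S c Q X : (X \in Gset H S c Q) =
  [&& X \in SATH H, S \subset X & [forall e in Q, satisfies X [set c e]]].
Proof. by rewrite /Gset /EC [in LHS]inE [in LHS]inE -andbA. Qed.

Section Step.
Variables (R : realType) (V : finType) (m : nat) (H : tfam V m).
Hypothesis HB : binary_tree_based H.
Variables (M : {set {set 'I_m}}) (S : {set V * bool}) (c : {set 'I_m} -> {set V * bool}).
Hypothesis hM : pseudomatching H M.
Hypothesis hVS : Vars S = setT :\: coverM H M.
Hypothesis hc : forall e, e \in M -> exists i j, e = [set i; j] /\ adjacent H i j /\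
        (c e = posclause (halfV H i j) \/ c e = posclause (halfV H j i)).

Lemma rt_cover e i : e \in M -> i \in e -> rt H i \in coverM H M.
Proof.
move=> eM ie; apply/imsetP; exists i => //.
by apply/bigcupP; exists e.
Qed.

Lemma Sout_lem e i j : e \in M -> e = [set i; j] -> forall l, l \in S -> out H i j l.1.
Proof.
move=> eM ee l lS.
have : l.1 \in Vars S by apply/imsetP; exists l.
rewrite hVS !inE => hn.
rewrite /out; apply/andP; split; apply/eqP => el; move: hn; rewrite el (rt_cover eM) //;
  by rewrite ee !inE eqxx ?orbT.
Qed.

Lemma other_out e i j e' : e \in M -> e = [set i; j] -> e' \in M -> e' != e ->
  forall l, l \in c e' -> out H i j l.1.
Proof.
move=> eM ee e'M ne [x b].
have [i1 [j1 [ee' [_ hce']]]] := hc e'M.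
have hx : forall k1 l1, k1 \in e' -> x \in halfV H k1 l1 -> out H i j x.
  move=> k1 l1 k1e; rewrite inE => /existsP[L /and3P[hk hl hp]].
  have xV := pathV_sub HB (leaf_in hk) hp.
  have /trivIsetP td := (andP hM).2.
  have d := td _ _ e'M eM ne.
  rewrite /out; apply/andP; split; apply/eqP => ex; subst x.
    have ek := rt_uniq HB xV; subst k1.
    by move: (disjointFr d k1e); rewrite ee !inE eqxx.
  have ek := rt_uniq HB xV; subst k1.
  by move: (disjointFr d k1e); rewrite ee !inE eqxx orbT.
case: hce' => ->; rewrite inE /= => /andP[_ h].
  by apply: (hx i1 j1) => //; rewrite ee' !inE eqxx.
by apply: (hx j1 i1) => //; rewrite ee' !inE eqxx orbT.
Qed.

Lemma step_key e (Q : {set {set 'I_m}}) i j : e \in M -> Q \subset M -> e \notin Q ->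
  e = [set i; j] -> adjacent H i j -> respects_ij H S i j ->
  c e = posclause (halfV H i j) ->
  sm H R (Gset H S c (e |: Q)) = (sm H R (Gset H S c Q) * (2 / 3))%R.
Proof.
move=> eM QM eQ ee hij hr hce.
have Sout := Sout_lem eM ee.
have hOm : forall X, X \in Gset H S c Q -> [/\ X \in SATH H, S \subset X &
  forall al be, al || be -> tog H i j al be X \in Gset H S c Q].
  move=> X; rewrite memG => /and3P[hs sx /forall_inP hQ]; split => // al be ab.
  rewrite memG (tog_SATH HB hr hij Sout hs sx ab) (tog_sub Sout al be sx) /=.
  apply/forall_inP => e' e'Q; rewrite sat1.
  have e'M := subsetP QM _ e'Q.
  have ne : e' != e by apply/eqP => E; subst e'; rewrite e'Q in eQ.
  apply: (agree_sat (tog_agree al be X) (other_out eM ee e'M ne)).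
  by rewrite -sat1; apply: hQ.
have -> : Gset H S c (e |: Q) = [set X in Gset H S c Q | (rt H i, true) \in X].
  apply/setP => X; rewrite inE !memG.
  case hX : (X \in SATH H) => //=; case sx : (S \subset X) => //=.
  have cX : consistent X by move: hX; rewrite inE => /and3P[].
  rewrite -(halfV_sat HB hr hij cX sx) -hce -sat1.
  apply/forall_inP/andP => [h|[/forall_inP h1 h2] e'].
    split; first by apply/forall_inP => e' he'; apply: h; rewrite !inE he' orbT.
    by apply: h; rewrite !inE eqxx.
  by rewrite !inE => /orP[/eqP ->|]; [exact: h2|apply: h1].
rewrite (sm_A HB hr hij Sout R hOm) (sm_Om HB hr hij Sout R hOm).
set x := sm H R (part H i j (Gset H S c Q) true true).
rewrite -(mulr_natr x 2) -(mulr_natr x 3) -mulrA.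
congr (_ * _)%R.
by rewrite mulrC divfK // pnatr_eq0.
Qed.

Lemma step e (Q : {set {set 'I_m}}) : e \in M -> respects H S e -> Q \subset M -> e \notin Q ->
  sm H R (Gset H S c (e |: Q)) = (sm H R (Gset H S c Q) * (2 / 3))%R.
Proof.
move=> eM /existsP[i /existsP[j /and3P[/eqP ee hij hr]]] QM eQ.
have [i0 [j0 [ee0 [hij0 hce]]]] := hc eM.
have ne0 : i0 != j0 by case/andP: hij0.
have hr0 : respects_ij H S i0 j0.
  case: (pair_eq (etrans (esym ee) ee0) ne0) => [[-> ->]|[-> ->]] //.
  by rewrite respects_sym.
case: hce => hce.
  exact: (step_key eM QM eQ ee0 hij0 hr0 hce).
have ee1 : e = [set j0; i0] by rewrite ee0 setUC.
rewrite adjacent_sym in hij0; rewrite respects_sym in hr0.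
exact: (step_key eM QM eQ ee1 hij0 hr0 hce).
Qed.
End Step.

Lemma weight_ge0 (R : realType) V m (H : tfam V m) X : (0 <= weight H R X)%R.
Proof. by rewrite /weight exprn_ge0 // invr_ge0 ler0n. Qed.

Lemma sum_sub (R : realType) V m (H : tfam V m) (A B : {set {set V * bool}}) :
  A \subset B -> (\sum_(X in A) weight H R X <= \sum_(X in B) weight H R X)%R.
Proof.
move=> AB; rewrite [X in (_ <= X)%R](big_setID A) /= (setIidPr AB).
by rewrite lerDl sumr_ge0 // => X _; apply: weight_ge0.
Qed.

Unset Implicit Arguments.
Local Open Scope ring_scope.

Theorem theorem7 (R : realType) (V : finType) (m : nat) (H : tfam V m)
    (M : {set {set 'I_m}}) (eta : R) (S : {set V * bool})
    (phi : {set {set V * bool}}) :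
  binary_tree_based H ->
  pseudomatching H M ->
  0 <= eta <= 1 ->
  consistent S ->
  Vars S = setT :\: coverM H M ->
  comfortable H eta S M ->
  inCNF H M phi ->
  condPr H R (ES H phi) (EC H S) <= (2 / 3 : R) `^ (eta * #|M|%:R).
Proof.
move=> HB hM heta cS hVS [nf hresp] [c [hc ephi]].
set Resp := [set e in M | respects H S e] in hresp.
have ind : forall n (Q : {set {set 'I_m}}), #|Q| = n -> Q \subset Resp ->
    sm H R (Gset H S c Q) = (2 / 3) ^+ n * sm H R (Gset H S c set0).
  elim => [|n IH] Q hQ hsub.
    by rewrite (cards0_eq hQ) expr0 mul1r.
  have : Q != set0 by apply/eqP => E; move: hQ; rewrite E cards0.
  case/set0Pn => e he.
  have hQ' : #|Q :\ e| = n by move: hQ; rewrite (cardsD1 e) he add1n => -[].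
  have hsub' : Q :\ e \subset Resp by apply: subset_trans hsub; apply: subsetDl.
  have := subsetP hsub e he; rewrite inE => /andP[eM er].
  have QM : Q :\ e \subset M.
    by apply/subsetP => x /(subsetP hsub'); rewrite inE => /andP[].
  rewrite -(setD1K he) (step R HB hM hVS hc eM er QM) ?setD11 // (IH _ hQ' hsub').
  by rewrite exprSr mulrAC.
have hG := ind _ Resp erefl (subxx _).
have G0 : Gset H S c set0 = EC H S.
  apply/setP => X; rewrite memG /EC [in RHS]inE.
  have -> : [forall e in set0, satisfies X [set c e]] by apply/forall_inP => e; rewrite inE.
  by rewrite andbT.
have sub : SATH H :&: (ES H phi :&: EC H S) \subset Gset H S c Resp.
  apply/subsetP => X; rewrite in_setI => /andP[_ /setIP[hES hEC]].
  move: hES hEC; rewrite /ES /EC inE => /andP[hs hphi]; rewrite inE => /andP[_ sx].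
  rewrite memG hs sx /=; apply/forall_inP => e; rewrite inE => /andP[eM _].
  rewrite sat1; move/forall_inP: hphi; apply; rewrite ephi.
  by apply/imsetP; exists e.
have PEC : Pr H R (EC H S) = sm H R (EC H S).
  have ECS : EC H S \subset SATH H by apply/subsetP => X; rewrite /EC inE => /andP[].
  by rewrite /Pr /sm (setIidPr ECS).
set r := #|Resp| in hG hresp.
have hle : Pr H R (ES H phi :&: EC H S) <= (2/3) ^+ r * sm H R (EC H S).
  rewrite /Pr; apply: le_trans (sum_sub R H sub) _.
  by rewrite -/(sm H R _) hG G0.
have h23 : 0 <= (2 / 3 : R) by rewrite divr_ge0 ?ler0n.
have hpow : (2 / 3 : R) ^+ r <= (2 / 3 : R) `^ (eta * #|M|%:R).
  rewrite -powR_mulrn //; apply: ger_powR => //.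
  by rewrite divr_gt0 ?ltr0n //= ler_pdivrMr ?ltr0n // mul1r ler_nat.
rewrite /condPr PEC.
have [E|nz] := eqVneq (sm H R (EC H S)) 0.
  by rewrite E invr0 mulr0 powR_ge0.
have pos : 0 < sm H R (EC H S).
  by rewrite lt0r nz /=; apply: sumr_ge0 => X _; apply: weight_ge0.
apply: le_trans hpow.
by rewrite ler_pdivrMr // .
Qed.
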